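(* The universal group functor $\mathrm{Gr}\colon\mathbf{EA}\to\mathbf{POG}_u$ is a strong monoidal functor from $(\mathbf{EA},\otimes,\underline2)$ to $(\mathbf{POG}_u,\otimes,(\mathbb{Z},1))$, with structure morphism $\epsilon\colon(\mathbb{Z},1)\to\mathrm{Gr}(\underline2)$ the unique morphism, and with natural isomorphisms $\mu_{E,F}\colon\mathrm{Gr}(E)\otimes\mathrm{Gr}(F)\to\mathrm{Gr}(E\otimes F)$ given on generators by $[x]\otimes[y]\mapsto[x\otimes y]$.
   Context: $\mathbf{EA}$: category of effect algebras (partial algebras $(E;\oplus,',0,1)$ with $\oplus$ commutative and associative as Kleene identities, $a\oplus b=1$ iff $b=a'$, $a\oplus1$ defined iff $a=0$) and homomorphisms preserving existing orthosums and $1$. It is monoidal with tensor product $E\otimes F$ (universal for bihomomorphisms: maps preserving existing orthosums in each variable with $(1,1)\mapsto1$) and unit $\underline2=\{0,1\}$. $\mathbf{POG}_u$: Abelian po-groups with order unit (an element $u\ge0$ such that every $x\le nu$ for some $n$), morphisms order-preserving unit-preserving group homomorphisms; monoidal with $(A,u)\otimes(B,v)=(A\otimes B,u\otimes v)$ (Abelian group tensor product, positive cone generated by $a\otimes b$, $a\in A^+,b\in B^+$) and unit $(\mathbb{Z},1)$. For $w\ge0$, $\Gamma(B,w)=[0,w]$ with $x\oplus y=x+y$ when $x+y\le w$. The universal group $(\mathrm{Gr}(E),u)$ of $E$ comes with $\eta_E\colon E\to\Gamma(\mathrm{Gr}(E),u)$ such that every effect algebra homomorphism $E\to\Gamma(B,w)$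 is $\Gamma(g)\circ\eta_E$ for a unique order-preserving group homomorphism $g$ with $g(u)=w$; $[x]$ denotes $\eta_E(x)$ as an element of $\mathrm{Gr}(E)$. A strong monoidal functor is a functor with an isomorphism $\epsilon$ from the unit to the image of the unit and a natural isomorphism $\mu$ from $F(-)\otimes F(-)$ to $F(-\otimes-)$ satisfying the standard associativity and unitality coherence conditions. *)

(* Defs.v *)
(* Effect algebras, po-groups with order unit, and the
   universal constructions (EA tensor product, universal group, tensor product
   of unital po-groups) are encoded through their universal properties. *)
From HB Require Import structures.
From mathcomp Require Import all_boot all_order all_algebra.
Set Implicit Arguments. Unset Strict Implicit. Unset Printing Implicit Defensive.
Import Order.TTheory GRing.Theory Num.Theory.
Local Open Scope ring_scope.

Record effect_algebra := EffectAlgebra {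
  ea_car :> Type;
  ea_sum : ea_car -> ea_car -> option ea_car;
  ea_compl : ea_car -> ea_car;
  ea_zero : ea_car;
  ea_one : ea_car;
  ea_sumC : forall a b, ea_sum a b = ea_sum b a;
  (* Kleene associativity (the converse direction follows by commutativity) *)
  ea_sumA : forall a b c ab abc, ea_sum a b = Some ab -> ea_sum ab c = Some abc ->
      exists bc, ea_sum b c = Some bc /\ ea_sum a bc = Some abc;
  ea_complP : forall a b, ea_sum a b = Some ea_one <-> b = ea_compl a;
  ea_oneP : forall a, ea_sum a ea_one <> None <-> a = ea_zero
}.

Arguments ea_sum {e}. Arguments ea_compl {e}.
Arguments ea_zero {e}. Arguments ea_one {e}.

Definition ea_hom (E F : effect_algebra) (f : E -> F) : Prop :=
  (forall a b c : E, ea_sum a b = Some c -> ea_sum (f a) (f b) = Some (f c))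
  /\ f ea_one = ea_one.

Definition ea_bimor (E F G : effect_algebra) (b : E -> F -> G) : Prop :=
  (forall (x : E) (y1 y2 y : F), ea_sum y1 y2 = Some y ->
      ea_sum (b x y1) (b x y2) = Some (b x y))
  /\ (forall (y : F) (x1 x2 x : E), ea_sum x1 x2 = Some x ->
      ea_sum (b x1 y) (b x2 y) = Some (b x y))
  /\ b ea_one ea_one = ea_one.

Record ea_tensor (E F : effect_algebra) := EATensor {
  et_obj : effect_algebra;
  et_map : E -> F -> et_obj;
  et_bimor : ea_bimor et_map;
  et_univ : forall (G : effect_algebra) (b : E -> F -> G), ea_bimor b ->
     exists h : et_obj -> G, (ea_hom h /\ forall x y, h (et_map x y) = b x y) /\
       forall h' : et_obj -> G, ea_hom h' -> (forall x y, h' (et_map x y) = b x y) ->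
         forall t, h' t = h t
}.

Definition two_sum (a b : bool) : option bool :=
  match a, b with
  | true, true => None
  | true, false => Some true
  | false, x => Some x
  end.

Lemma two_sumC a b : two_sum a b = two_sum b a.
Proof. by case: a; case: b. Qed.

Lemma two_sumA a b c ab abc : two_sum a b = Some ab -> two_sum ab c = Some abc ->
  exists bc, two_sum b c = Some bc /\ two_sum a bc = Some abc.
Proof.
case: a; case: b; case: c => //= -[<-] //= -[<-];
  eexists; split; reflexivity.
Qed.

Lemma two_complP a b : two_sum a b = Some true <-> b = ~~ a.
Proof. by case: a; case: b. Qed.

Lemma two_oneP a : two_sum a true <> None <-> a = false.
Proof. by case: a. Qed.

Definition EA2 : effect_algebra :=
  @EffectAlgebra bool two_sum negb false true two_sumC two_sumA two_complP two_oneP.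

Record pog := POG {
  pog_car :> zmodType;
  pog_pos : pog_car -> Prop;
  pog_pos0 : pog_pos 0;
  pog_posD : forall x y, pog_pos x -> pog_pos y -> pog_pos (x + y);
  pog_posN : forall x, pog_pos x -> pog_pos (- x) -> x = 0
}.
Arguments pog_pos {p}.

Definition pog_le (A : pog) (x y : A) : Prop := pog_pos (y - x).

Definition order_unit (A : pog) (u : A) : Prop :=
  pog_pos u /\ forall x : A, exists n : nat, pog_le x (u *+ n).

Record pogu := POGu {
  pg :> pog;
  pg_unit : pg;
  pg_unitP : order_unit pg_unit
}.
Arguments pg_unit {p}.

Definition pog_hom (A B : pog) (f : A -> B) : Prop :=
  (forall x y, f (x + y) = f x + f y) /\ (forall x, pog_pos x -> pog_pos (f x)).

Definition pogu_hom (A B : pogu) (f : A -> B) : Prop :=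
  pog_hom f /\ f pg_unit = pg_unit.

Definition pogu_iso (A B : pogu) (f : A -> B) : Prop :=
  pogu_hom f /\ exists g : B -> A, pogu_hom g /\ cancel f g /\ cancel g f.

Lemma int_pos0 : (0 : int) <= 0. Proof. by []. Qed.
Lemma int_posD (x y : int) : 0 <= x -> 0 <= y -> 0 <= x + y.
Proof. exact: addr_ge0. Qed.
Lemma int_posN (x : int) : 0 <= x -> 0 <= - x -> x = 0.
Proof. by move=> h1; rewrite oppr_ge0 => h2; apply/eqP; rewrite eq_le h1 h2. Qed.

Definition Zpog : pog := @POG int (fun x => 0 <= x) int_pos0 int_posD int_posN.

Lemma Zunit : order_unit (A := Zpog) 1.
Proof.
split; first by rewrite /= ler01.
move=> x; exists `|x|%N; rewrite /pog_le /= subr_ge0.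
rewrite -[1 *+ _]/((`|x|%N)%:R) natr_absz intz; exact: ler_norm.
Qed.

Definition Zu : pogu := @POGu Zpog 1 Zunit.

(* Gamma(B,w)-valued effect algebra homomorphisms, written out *)
Definition gamma_hom (E : effect_algebra) (B : pog) (w : B) (phi : E -> B) : Prop :=
  (forall x, pog_le 0 (phi x) /\ pog_le (phi x) w) /\
  (forall a b c : E, ea_sum a b = Some c -> phi c = phi a + phi b) /\
  phi ea_one = w.

Record univ_group (E : effect_algebra) := UnivGroup {
  ug_obj : pogu;
  ug_eta : E -> ug_obj;
  ug_etaP : gamma_hom pg_unit ug_eta;
  ug_univ : forall (B : pog) (w : B), pog_pos w -> forall phi : E -> B, gamma_hom w phi ->
     exists g : ug_obj -> B, (pog_hom g /\ g pg_unit = w /\ forall x, g (ug_eta x) = phi x) /\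
       forall g' : ug_obj -> B, pog_hom g' -> g' pg_unit = w ->
         (forall x, g' (ug_eta x) = phi x) -> forall t, g' t = g t
}.

Definition biadditive (A B : zmodType) (C : zmodType) (f : A -> B -> C) : Prop :=
  (forall a b1 b2, f a (b1 + b2) = f a b1 + f a b2) /\
  (forall a1 a2 b, f (a1 + a2) b = f a1 b + f a2 b).

Record pogu_tensor (A B : pogu) := POGuTensor {
  pt_obj : pogu;
  pt_map : A -> B -> pt_obj;
  pt_biadd : biadditive pt_map;
  pt_univ : forall (C : zmodType) (f : A -> B -> C), biadditive f ->
     exists h : pt_obj -> C, ((forall s t, h (s + t) = h s + h t) /\
        forall a b, h (pt_map a b) = f a b) /\
       forall h' : pt_obj -> C, (forall s t, h' (s + t) = h' s + h' t) ->
         (forall a b, h' (pt_map a b) = f a b) -> forall t, h' t = h t;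
  pt_pos : forall t : pt_obj, pog_pos t <->
     exists (n : nat) (a : 'I_n -> A) (b : 'I_n -> B),
        (forall i, pog_pos (a i) /\ pog_pos (b i)) /\
        t = \sum_(i < n) pt_map (a i) (b i);
  pt_unit : pg_unit = pt_map pg_unit pg_unit
}.

Definition is_Gr_map (E E' : effect_algebra) (f : E -> E')
    (G : univ_group E) (G' : univ_group E') (g : ug_obj G -> ug_obj G') : Prop :=
  pogu_hom g /\ forall x, g (ug_eta G x) = ug_eta G' (f x).

Arguments is_Gr_map {E E'} f G G' g.

Definition is_ea_tensor_map (E F E' F' : effect_algebra) (T : ea_tensor E F)
    (T' : ea_tensor E' F') (f : E -> E') (g : F -> F') (h : et_obj T -> et_obj T') :=
  ea_hom h /\ forall x y, h (et_map T x y) = et_map T' (f x) (g y).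

Arguments is_ea_tensor_map {E F E' F'} T T' f g h.

Definition is_pog_tensor_map (A B A' B' : pogu) (P : pogu_tensor A B)
    (P' : pogu_tensor A' B') (f : A -> A') (g : B -> B') (k : pt_obj P -> pt_obj P') :=
  pogu_hom k /\ forall a b, k (pt_map P a b) = pt_map P' (f a) (g b).

Arguments is_pog_tensor_map {A B A' B'} P P' f g k.

Definition is_mu (E F : effect_algebra) (T : ea_tensor E F) (GE : univ_group E)
    (GF : univ_group F) (GT : univ_group (et_obj T))
    (P : pogu_tensor (ug_obj GE) (ug_obj GF)) (m : pt_obj P -> ug_obj GT) : Prop :=
  pogu_hom m /\
  forall x y, m (pt_map P (ug_eta GE x) (ug_eta GF y)) = ug_eta GT (et_map T x y).

Definition eps (G2 : univ_group EA2) (z : int) : ug_obj G2 := pg_unit *~ z.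

Definition epsilon_ok : Prop :=
  forall G2 : univ_group EA2,
    pogu_iso (A := Zu) (eps G2) /\
    forall f : Zu -> ug_obj G2, pogu_hom f -> forall z, f z = eps G2 z.

Definition mu_iso_ok : Prop :=
  forall (E F : effect_algebra) (T : ea_tensor E F) (GE : univ_group E)
    (GF : univ_group F) (GT : univ_group (et_obj T))
    (P : pogu_tensor (ug_obj GE) (ug_obj GF)),
  exists m : pt_obj P -> ug_obj GT,
    is_mu m /\ pogu_iso m /\
    forall m' : pt_obj P -> ug_obj GT, is_mu m' -> forall t, m' t = m t.

Definition mu_natural : Prop :=
  forall (E E' F F' : effect_algebra) (f : E -> E') (g : F -> F'),
  ea_hom f -> ea_hom g ->
  forall (T : ea_tensor E F) (T' : ea_tensor E' F')
    (GE : univ_group E) (GE' : univ_group E') (GF : univ_group F) (GF' : univ_group F')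
    (GT : univ_group (et_obj T)) (GT' : univ_group (et_obj T'))
    (P : pogu_tensor (ug_obj GE) (ug_obj GF)) (P' : pogu_tensor (ug_obj GE') (ug_obj GF'))
    (fg : et_obj T -> et_obj T') (Gf : ug_obj GE -> ug_obj GE')
    (Gg : ug_obj GF -> ug_obj GF') (Gfg : ug_obj GT -> ug_obj GT')
    (k : pt_obj P -> pt_obj P') (m : pt_obj P -> ug_obj GT) (m' : pt_obj P' -> ug_obj GT'),
  is_ea_tensor_map T T' f g fg -> is_Gr_map f GE GE' Gf -> is_Gr_map g GF GF' Gg ->
  is_Gr_map fg GT GT' Gfg -> is_pog_tensor_map P P' Gf Gg k ->
  is_mu m -> is_mu m' ->
  forall t, Gfg (m t) = m' (k t).

(* associativity coherence:
   Gr(alpha) o mu_{E(x)F,H} o (mu_{E,F} (x) id) = mu_{E,F(x)H} o (id (x) mu_{F,H}) o alpha *)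
Definition mu_assoc : Prop :=
  forall (E F H : effect_algebra) (TEF : ea_tensor E F) (TFH : ea_tensor F H)
    (TL : ea_tensor (et_obj TEF) H) (TR : ea_tensor E (et_obj TFH))
    (GE : univ_group E) (GF : univ_group F) (GH : univ_group H)
    (GEF : univ_group (et_obj TEF)) (GFH : univ_group (et_obj TFH))
    (GL : univ_group (et_obj TL)) (GR : univ_group (et_obj TR))
    (PEF : pogu_tensor (ug_obj GE) (ug_obj GF)) (PFH : pogu_tensor (ug_obj GF) (ug_obj GH))
    (PL : pogu_tensor (ug_obj GEF) (ug_obj GH)) (PR : pogu_tensor (ug_obj GE) (ug_obj GFH))
    (QL : pogu_tensor (pt_obj PEF) (ug_obj GH)) (QR : pogu_tensor (ug_obj GE) (pt_obj PFH))
    (alpha : et_obj TL -> et_obj TR) (Galpha : ug_obj GL -> ug_obj GR)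
    (alphaP : pt_obj QL -> pt_obj QR)
    (mEF : pt_obj PEF -> ug_obj GEF) (mFH : pt_obj PFH -> ug_obj GFH)
    (mL : pt_obj PL -> ug_obj GL) (mR : pt_obj PR -> ug_obj GR)
    (k1 : pt_obj QL -> pt_obj PL) (k2 : pt_obj QR -> pt_obj PR),
  ea_hom alpha ->
  (forall x y z, alpha (et_map TL (et_map TEF x y) z) = et_map TR x (et_map TFH y z)) ->
  is_Gr_map alpha GL GR Galpha ->
  pogu_hom alphaP ->
  (forall a b c, alphaP (pt_map QL (pt_map PEF a b) c) = pt_map QR a (pt_map PFH b c)) ->
  is_mu mEF -> is_mu mFH -> is_mu mL -> is_mu mR ->
  is_pog_tensor_map QL PL mEF id k1 -> is_pog_tensor_map QR PR id mFH k2 ->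
  forall t, Galpha (mL (k1 t)) = mR (k2 (alphaP t)).

(* left unit coherence: Gr(lambda) o mu_{2,E} o (eps (x) id) = lambda *)
Definition mu_left_unit : Prop :=
  forall (E : effect_algebra) (T : ea_tensor EA2 E) (G2 : univ_group EA2)
    (GE : univ_group E) (GT : univ_group (et_obj T))
    (P : pogu_tensor (ug_obj G2) (ug_obj GE)) (Q : pogu_tensor Zu (ug_obj GE))
    (lam : et_obj T -> E) (Glam : ug_obj GT -> ug_obj GE) (lamP : pt_obj Q -> ug_obj GE)
    (m : pt_obj P -> ug_obj GT) (k : pt_obj Q -> pt_obj P),
  ea_hom lam -> (forall (b : bool) (x : E), lam (et_map T b x) = if b then x else ea_zero) ->
  is_Gr_map lam GT GE Glam ->
  pogu_hom lamP -> (forall (n : int) a, lamP (pt_map Q n a) = a *~ n) ->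
  is_mu m -> is_pog_tensor_map Q P (eps G2) id k ->
  forall t, Glam (m (k t)) = lamP t.

(* right unit coherence: Gr(rho) o mu_{E,2} o (id (x) eps) = rho *)
Definition mu_right_unit : Prop :=
  forall (E : effect_algebra) (T : ea_tensor E EA2) (G2 : univ_group EA2)
    (GE : univ_group E) (GT : univ_group (et_obj T))
    (P : pogu_tensor (ug_obj GE) (ug_obj G2)) (Q : pogu_tensor (ug_obj GE) Zu)
    (rho : et_obj T -> E) (Grho : ug_obj GT -> ug_obj GE) (rhoP : pt_obj Q -> ug_obj GE)
    (m : pt_obj P -> ug_obj GT) (k : pt_obj Q -> pt_obj P),
  ea_hom rho -> (forall (x : E) (b : bool), rho (et_map T x b) = if b then x else ea_zero) ->
  is_Gr_map rho GT GE Grho ->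
  pogu_hom rhoP -> (forall a (n : int), rhoP (pt_map Q a n) = a *~ n) ->
  is_mu m -> is_pog_tensor_map Q P id (eps G2) k ->
  forall t, Grho (m (k t)) = rhoP t.

(* Main.v *)
Require Import Defs.
From HB Require Import structures.
From mathcomp Require Import all_boot all_order all_algebra.
From Stdlib Require Import ClassicalEpsilon ProofIrrelevance.
Set Implicit Arguments. Unset Strict Implicit. Unset Printing Implicit Defensive.
Import Order.TTheory GRing.Theory Num.Theory.
Local Open Scope ring_scope.
Definition addf (A B : zmodType) (g : A -> B) := forall x y, g (x + y) = g x + g y.

Lemma addf0 (A B : zmodType) (g : A -> B) : addf g -> g 0 = 0.
Proof. by move=> h; apply: (@addrI _ (g 0)); rewrite -h !addr0. Qed.

Lemma addfN (A B : zmodType) (g : A -> B) : addf g -> forall x, g (- x) = - g x.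
Proof. by move=> h x; apply: (@addrI _ (g x)); rewrite -h !subrr addf0. Qed.

Lemma addfB (A B : zmodType) (g : A -> B) : addf g -> forall x y, g (x - y) = g x - g y.
Proof. by move=> h x y; rewrite h addfN. Qed.

Lemma addfMn (A B : zmodType) (g : A -> B) : addf g -> forall x n, g (x *+ n) = g x *+ n.
Proof. by move=> h x; elim=> [|n IH]; rewrite ?mulr0n ?addf0 // !mulrS h IH. Qed.

Lemma addfMz (A B : zmodType) (g : A -> B) : addf g -> forall x z, g (x *~ z) = g x *~ z.
Proof.
move=> h x [n|n]; first exact: addfMn.
by rewrite /= addfN // addfMn.
Qed.

Lemma addf_sum (A B : zmodType) (g : A -> B) : addf g ->
  forall n (F : 'I_n -> A), g (\sum_(i < n) F i) = \sum_(i < n) g (F i).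
Proof.
move=> h; elim=> [|n IH] F; first by rewrite !big_ord0 addf0.
by rewrite !big_ord_recr /= h IH.
Qed.

Lemma addf_int (B : zmodType) (g : int -> B) : addf g -> forall z, g z = g 1 *~ z.
Proof. by move=> h z; rewrite -addfMz // -[1 *~ z]/(z%:~R) intz. Qed.

Lemma addf_comp (A B C : zmodType) (g : A -> B) (f : B -> C) :
  addf g -> addf f -> addf (f \o g).
Proof. by move=> hg hf x y /=; rewrite hg hf. Qed.
Lemma pos_le0 (A : pog) (x : A) : pog_le 0 x <-> pog_pos x.
Proof. by rewrite /pog_le subr0. Qed.

Lemma pos_sum (A : pog) n (F : 'I_n -> A) :
  (forall i, pog_pos (F i)) -> pog_pos (\sum_(i < n) F i).
Proof.
elim: n F => [|n IH] F hF; first by rewrite big_ord0; exact: pog_pos0.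
by rewrite big_ord_recr /=; apply: pog_posD => //; apply: IH.
Qed.

Lemma pos_Mn (A : pog) (x : A) n : pog_pos x -> pog_pos (x *+ n).
Proof.
move=> hx; elim: n => [|n IH]; first by rewrite mulr0n; exact: pog_pos0.
by rewrite mulrS; apply: pog_posD.
Qed.

Lemma pos_decomp (A : pogu) (a : A) :
  exists p q : A, pog_pos p /\ pog_pos q /\ a = p - q.
Proof.
have [hu hn] := pg_unitP A.
have [n hn'] := hn a.
exists (pg_unit *+ n), (pg_unit *+ n - a); split; first exact: pos_Mn.
by split => //; rewrite opprB addrC subrK.
Qed.

Definition pog_hom_add (A B : pog) (f : A -> B) : pog_hom f -> addf f.
Proof. by case. Qed.

Lemma pog_hom_comp (A B C : pog) (f : A -> B) (g : B -> C) :
  pog_hom f -> pog_hom g -> pog_hom (g \o f).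
Proof.
move=> [f1 f2] [g1 g2]; split; first exact: addf_comp.
by move=> x hx /=; apply: g2; apply: f2.
Qed.

Lemma pog_hom_id (A : pog) : pog_hom (@id A).
Proof. by split. Qed.

Lemma pog_hom_add2 (A B : pog) (f g : A -> B) :
  pog_hom f -> pog_hom g -> pog_hom (fun x => f x + g x).
Proof.
move=> [f1 f2] [g1 g2]; split.
  by move=> x y; rewrite f1 g1 addrACA.
by move=> x hx; apply: pog_posD; [apply: f2|apply: g2].
Qed.
Section UG.
Variables (E : effect_algebra) (G : univ_group E).

Lemma eta_pos x : pog_pos (ug_eta G x).
Proof. by have [h _] := ug_etaP G; apply/pos_le0; case: (h x). Qed.

Lemma eta_le x : pog_pos (pg_unit - ug_eta G x).
Proof. by have [h _] := ug_etaP G; case: (h x). Qed.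

Lemma eta_one : ug_eta G ea_one = pg_unit.
Proof. by have [_ [_ h]] := ug_etaP G. Qed.

Lemma eta_sum a b c : ea_sum a b = Some c -> ug_eta G c = ug_eta G a + ug_eta G b.
Proof. by have [_ [h _]] := ug_etaP G; apply: h. Qed.

Lemma ug_ext (B : pog) (g g' : ug_obj G -> B) : pog_hom g -> pog_hom g' ->
  (forall x, g (ug_eta G x) = g' (ug_eta G x)) -> forall t, g t = g' t.
Proof.
move=> hg hg' e.
have wpos : pog_pos (g pg_unit) by case: hg => _ h; apply: h; case: (pg_unitP (ug_obj G)).
have gh : gamma_hom (g pg_unit) (g \o ug_eta G).
  split; [|split].
  - move=> x; split; first by apply/pos_le0; case: hg => _ h; apply: h; apply: eta_pos.
    by rewrite /pog_le /= -addfB; [case: hg => _ h; apply: h; apply: eta_le|exact: pog_hom_add].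
  - by move=> a b c /= /eta_sum ->; rewrite (pog_hom_add hg).
  - by rewrite /= eta_one.
have [k [_ uniq]] := ug_univ G wpos gh.
move=> t; rewrite (uniq g) // (uniq g') //.
  by rewrite -eta_one e eta_one.
by move=> x; rewrite -e.
Qed.

Lemma ug_ext_ex (B : pog) (w : B) (phi : E -> B) : pog_pos w -> gamma_hom w phi ->
  { g : ug_obj G -> B | pog_hom g /\ g pg_unit = w /\ forall x, g (ug_eta G x) = phi x }.
Proof.
move=> wp gh; apply: constructive_indefinite_description.
by have [g [h _]] := ug_univ G wp gh; exists g.
Qed.
End UG.
Lemma pt_posP (A B : pogu) (P : pogu_tensor A B) a b :
  pog_pos a -> pog_pos b -> pog_pos (pt_map P a b).
Proof.
move=> ha hb; apply (proj2 (pt_pos (p:=P) _)); exists 1%N, (fun=> a), (fun=> b); split => //.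
by rewrite big_ord1.
Qed.

Lemma pt_addl (A B : pogu) (P : pogu_tensor A B) b : addf (fun a => pt_map P a b).
Proof. by case: (pt_biadd P) => _ h x y; apply: h. Qed.

Lemma pt_addr (A B : pogu) (P : pogu_tensor A B) a : addf (pt_map P a).
Proof. by case: (pt_biadd P) => h _ x y; apply: h. Qed.

Lemma pt_ext (A B : pogu) (P : pogu_tensor A B) (C : zmodType) (h1 h2 : pt_obj P -> C) :
  addf h1 -> addf h2 -> (forall a b, h1 (pt_map P a b) = h2 (pt_map P a b)) ->
  forall t, h1 t = h2 t.
Proof.
move=> a1 a2 e.
have bi : biadditive (fun a b => h1 (pt_map P a b)).
  by split=> *; rewrite ?pt_addl ?pt_addr a1.
have [h [_ u]] := pt_univ P bi.
by move=> t; rewrite (u h1) // (u h2).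
Qed.

Lemma pt_pos_hom (A B : pogu) (P : pogu_tensor A B) (C : pog) (h : pt_obj P -> C) :
  addf h -> (forall a b, pog_pos a -> pog_pos b -> pog_pos (h (pt_map P a b))) ->
  forall t, pog_pos t -> pog_pos (h t).
Proof.
move=> ah hp t /(proj1 (pt_pos (p:=P) _)) [n [a [b [hab ->]]]].
rewrite addf_sum //; apply: pos_sum => i; case: (hab i) => *; exact: hp.
Qed.

Definition bipos (A B : pogu) (C : pog) (f : A -> B -> C) :=
  forall a b, pog_pos a -> pog_pos b -> pog_pos (f a b).

Lemma bi_ext' (A : pogu) (F : effect_algebra) (GF : univ_group F) (C : pog)
  (f1 f2 : A -> ug_obj GF -> C) :
  biadditive f1 -> biadditive f2 -> bipos f1 -> bipos f2 ->
  (forall a y, f1 a (ug_eta GF y) = f2 a (ug_eta GF y)) ->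
  forall a b, f1 a b = f2 a b.
Proof.
move=> [b1r b1l] [b2r b2l] p1 p2 e.
have posc : forall a b, pog_pos a -> f1 a b = f2 a b.
  move=> a b ha; apply: (ug_ext (g:=f1 a) (g':=f2 a)) => //.
    by split; [move=> x y; apply: b1r|move=> x hx; apply: p1].
  by split; [move=> x y; apply: b2r|move=> x hx; apply: p2].
move=> a b; have [p [q [hp [hq ->]]]] := pos_decomp a.
have l1 : addf (fun a => f1 a b) by move=> x y; apply: b1l.
have l2 : addf (fun a => f2 a b) by move=> x y; apply: b2l.
rewrite (addfB l1) (addfB l2) /=.
by rewrite !posc.
Qed.

Lemma bi_ext (E F : effect_algebra) (GE : univ_group E) (GF : univ_group F) (C : pog)
  (f1 f2 : ug_obj GE -> ug_obj GF -> C) :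
  biadditive f1 -> biadditive f2 -> bipos f1 -> bipos f2 ->
  (forall x y, f1 (ug_eta GE x) (ug_eta GF y) = f2 (ug_eta GE x) (ug_eta GF y)) ->
  forall a b, f1 a b = f2 a b.
Proof.
move=> b1 b2 p1 p2 e; apply: bi_ext' => // a y.
case: b1 b2 => [b1r b1l] [b2r b2l].
apply: (ug_ext (g:=fun a => f1 a (ug_eta GF y)) (g':=fun a => f2 a (ug_eta GF y))) => //.
  by split; [move=> x z; apply: b1l|move=> x hx; apply: p1 => //; apply: eta_pos].
by split; [move=> x z; apply: b2l|move=> x hx; apply: p2 => //; apply: eta_pos].
Qed.

Lemma tensor_ext (E F : effect_algebra) (GE : univ_group E) (GF : univ_group F) (C : pog)
  (P : pogu_tensor (ug_obj GE) (ug_obj GF)) (h1 h2 : pt_obj P -> C) :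
  pog_hom h1 -> pog_hom h2 ->
  (forall x y, h1 (pt_map P (ug_eta GE x) (ug_eta GF y)) = h2 (pt_map P (ug_eta GE x) (ug_eta GF y))) ->
  forall t, h1 t = h2 t.
Proof.
move=> [a1 o1] [a2 o2] e; apply: pt_ext => // a b.
apply: (bi_ext (f1 := fun a b => h1 (pt_map P a b)) (f2 := fun a b => h2 (pt_map P a b))) => //.
- by split=> *; rewrite ?pt_addl ?pt_addr a1.
- by split=> *; rewrite ?pt_addl ?pt_addr a2.
- by move=> x y hx hy; apply: o1; apply: pt_posP.
- by move=> x y hx hy; apply: o2; apply: pt_posP.
Qed.
Lemma eps_hom (G2 : univ_group EA2) : pogu_hom (A := Zu) (eps G2).
Proof.
split; last by [].
split; first by move=> x y; rewrite /eps mulrzDr.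
case=> [n|n] hn /=; last by [].
rewrite /eps; apply: pos_Mn; by case: (pg_unitP (ug_obj G2)).
Qed.

Lemma eta2_false (G2 : univ_group EA2) : ug_eta G2 false = 0.
Proof.
have h := eta_sum G2 (a := false) (b := false) (c := false) erefl.
by apply: (@addrI _ (ug_eta G2 false)); rewrite -h addr0.
Qed.

Lemma epsilon_okP : epsilon_ok.
Proof.
move=> G2; split.
  split; first exact: eps_hom.
  pose phi (b : EA2) : Zpog := if b then 1 else 0.
  have gh : gamma_hom (B := Zpog) 1 phi.
    split; [|split].
    - by case; rewrite /pog_le /phi /=.
    - by case; case => c //= [<-]; rewrite /phi /= ?addr0 ?add0r.
    - by [].
  have [g [[ga gp] [g1 ge]]] := ug_ext_ex G2 (B := Zpog) (w := 1) (isT : pog_pos (1 : Zpog)) gh.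
  exists g; split; first by split.
  have gK : cancel (eps G2) g.
    by move=> z; rewrite /eps (addfMz ga) g1 /= -[1 *~ z]/(z%:~R) intz.
  split => //.
  move=> t; apply: (ug_ext (g := eps G2 \o g) (g' := id)) => //.
  - exact: pog_hom_comp (proj1 (eps_hom G2)).
  - by case=> /=; rewrite ge /phi /= ?eta2_false //; rewrite eta_one.
move=> f [[fa fp] f1] z.
by rewrite (addf_int fa) /eps; congr (_ *~ _); exact: f1.
Qed.
Lemma pogu_hom_pog (A B : pogu) (f : A -> B) : pogu_hom f -> pog_hom f.
Proof. by case. Qed.

Lemma mu_naturalP : mu_natural.
Proof.
move=> E E' F F' f g hf hg T T' GE GE' GF GF' GT GT' P P' fg Gf Gg Gfg k m m'
  [fgh fge] [Gfh Gfe] [Ggh Gge] [Gfgh Gfge] [kh ke] [mh me] [m'h m'e] t.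
apply: (tensor_ext (h1 := Gfg \o m) (h2 := m' \o k)).
- exact: pog_hom_comp (pogu_hom_pog mh) (pogu_hom_pog Gfgh).
- exact: pog_hom_comp (pogu_hom_pog kh) (pogu_hom_pog m'h).
by move=> x y /=; rewrite me Gfge fge ke Gfe Gge m'e.
Qed.

Lemma mu_assocP : mu_assoc.
Proof.
move=> E F H TEF TFH TL TR GE GF GH GEF GFH GL GR PEF PFH PL PR QL QR alpha Galpha alphaP
  mEF mFH mL mR k1 k2 ha hae [Gah Gae] aPh aPe [mEFh mEFe] [mFHh mFHe] [mLh mLe] [mRh mRe]
  [k1h k1e] [k2h k2e] t.
pose h1 := Galpha \o mL \o k1.
pose h2 := mR \o k2 \o alphaP.
have ph1 : pog_hom h1.
  by apply: pog_hom_comp (pogu_hom_pog Gah); apply: pog_hom_comp (pogu_hom_pog mLh); apply: pogu_hom_pog.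
have ph2 : pog_hom h2.
  apply: pog_hom_comp (pogu_hom_pog mRh); apply: pog_hom_comp (pogu_hom_pog k2h).
  exact: pogu_hom_pog.
case: (ph1) => a1 o1; case: (ph2) => a2 o2.
apply: (pt_ext (h1 := h1) (h2 := h2)) => // p c.
apply: (bi_ext' (f1 := fun p c => h1 (pt_map QL p c)) (f2 := fun p c => h2 (pt_map QL p c))).
- by split=> *; rewrite ?pt_addl ?pt_addr a1.
- by split=> *; rewrite ?pt_addl ?pt_addr a2.
- by move=> x y hx hy; apply: o1; apply: pt_posP.
- by move=> x y hx hy; apply: o2; apply: pt_posP.
move=> {}p z.
apply: (tensor_ext (h1 := fun p => h1 (pt_map QL p (ug_eta GH z)))
                   (h2 := fun p => h2 (pt_map QL p (ug_eta GH z)))).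
- split; first by move=> x y; rewrite pt_addl a1.
  by move=> x hx; apply: o1; apply: pt_posP => //; apply: eta_pos.
- split; first by move=> x y; rewrite pt_addl a2.
  by move=> x hx; apply: o2; apply: pt_posP => //; apply: eta_pos.
move=> x y; rewrite /h1 /h2 /=.
by rewrite k1e mEFe mLe Gae hae aPe k2e mFHe mRe.
Qed.
Lemma mu_left_unitP : mu_left_unit.
Proof.
move=> E T G2 GE GT P Q lam Glam lamP m k hl hle [Glh Gle] lPh lPe [mh me] [kh ke] t.
pose h1 := Glam \o m \o k.
have ph1 : pog_hom h1.
  by apply: pog_hom_comp (pogu_hom_pog Glh); apply: pog_hom_comp (pogu_hom_pog mh); apply: pogu_hom_pog.
have ph2 := pogu_hom_pog lPh.
case: (ph1) => a1 o1; case: (ph2) => a2 o2.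
apply: (pt_ext (h1 := h1) (h2 := lamP)) => // n a.
have l1 : addf (fun n => h1 (pt_map Q n a)) by move=> x y; rewrite pt_addl a1.
have l2 : addf (fun n => lamP (pt_map Q n a)) by move=> x y; rewrite pt_addl a2.
rewrite (addf_int l1) (addf_int l2); congr (_ *~ _).
apply: (ug_ext (g := fun a => h1 (pt_map Q 1 a)) (g' := fun a => lamP (pt_map Q 1 a))).
- split; first by move=> x y; rewrite pt_addr a1.
  by move=> x hx; apply: o1; apply: pt_posP.
- split; first by move=> x y; rewrite pt_addr a2.
  by move=> x hx; apply: o2; apply: pt_posP.
move=> x; rewrite /h1 /= ke lPe.
have -> : eps G2 1 = ug_eta G2 true by rewrite eta_one.
by rewrite me Gle hle.
Qed.

Lemma mu_right_unitP : mu_right_unit.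
Proof.
move=> E T G2 GE GT P Q rho Grho rhoP m k hl hle [Glh Gle] lPh lPe [mh me] [kh ke] t.
pose h1 := Grho \o m \o k.
have ph1 : pog_hom h1.
  by apply: pog_hom_comp (pogu_hom_pog Glh); apply: pog_hom_comp (pogu_hom_pog mh); apply: pogu_hom_pog.
have ph2 := pogu_hom_pog lPh.
case: (ph1) => a1 o1; case: (ph2) => a2 o2.
apply: (pt_ext (h1 := h1) (h2 := rhoP)) => // a n.
have l1 : addf (fun n => h1 (pt_map Q a n)) by move=> x y; rewrite pt_addr a1.
have l2 : addf (fun n => rhoP (pt_map Q a n)) by move=> x y; rewrite pt_addr a2.
rewrite (addf_int l1) (addf_int l2); congr (_ *~ _).
apply: (ug_ext (g := fun a => h1 (pt_map Q a 1)) (g' := fun a => rhoP (pt_map Q a 1))).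
- split; first by move=> x y; rewrite pt_addl a1.
  by move=> x hx; apply: o1; apply: pt_posP.
- split; first by move=> x y; rewrite pt_addl a2.
  by move=> x hx; apply: o2; apply: pt_posP.
move=> x; rewrite /h1 /= ke lPe.
have -> : eps G2 1 = ug_eta G2 true by rewrite eta_one.
by rewrite me Gle hle.
Qed.
Section Gamma.
Variables (B : pog) (w : B).
Hypothesis wp : pog_pos w.

Definition gcar := {x : B | pog_le 0 x /\ pog_le x w}.

Lemma gval_inj (a b : gcar) : proj1_sig a = proj1_sig b -> a = b.
Proof.
case: a b => [a ha] [b hb] /= e; subst b; congr exist; exact: proof_irrelevance.
Qed.

Lemma gsum_in (a b : gcar) : pog_le (proj1_sig a + proj1_sig b) w ->
  pog_le 0 (proj1_sig a + proj1_sig b) /\ pog_le (proj1_sig a + proj1_sig b) w.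
Proof.
case: a b => [a [ha _]] [b [hb _]] /= h; split => //.
by apply/pos_le0; apply: pog_posD; apply/pos_le0.
Qed.

Definition gsum (a b : gcar) : option gcar :=
  match excluded_middle_informative (pog_le (proj1_sig a + proj1_sig b) w) with
  | left H => Some (exist _ _ (gsum_in H))
  | right _ => None
  end.

Lemma gsumP a b c : gsum a b = Some c <->
  pog_le (proj1_sig a + proj1_sig b) w /\ proj1_sig c = proj1_sig a + proj1_sig b.
Proof.
rewrite /gsum; case: excluded_middle_informative => H; split.
- by case=> <-.
- by case=> _ e; congr Some; apply: gval_inj.
- by [].
- by case.
Qed.

Lemma gsumN a b : gsum a b = None <-> ~ pog_le (proj1_sig a + proj1_sig b) w.
Proof. by rewrite /gsum; case: excluded_middle_informative. Qed.

Lemma gcompl_in (a : gcar) : pog_le 0 (w - proj1_sig a) /\ pog_le (w - proj1_sig a) w.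
Proof.
case: a => [a [ha hb]] /=; split; first by apply/pos_le0.
by rewrite /pog_le opprB addrC subrK; apply/pos_le0.
Qed.

Definition gcompl (a : gcar) : gcar := exist _ _ (gcompl_in a).

Lemma gzero_in : pog_le 0 (0 : B) /\ pog_le 0 w.
Proof. by split; apply/pos_le0 => //; exact: pog_pos0. Qed.

Lemma gone_in : pog_le 0 w /\ pog_le w w.
Proof. by split; [apply/pos_le0|rewrite /pog_le subrr; exact: pog_pos0]. Qed.

Definition gzero : gcar := exist _ _ gzero_in.
Definition gone : gcar := exist _ _ gone_in.

Lemma gsumC a b : gsum a b = gsum b a.
Proof.
case E1: (gsum a b) => [c|]; case E2: (gsum b a) => [d|] //.
- move/gsumP: E1 => [_ e1]; move/gsumP: E2 => [_ e2].
  by congr Some; apply: gval_inj; rewrite e1 e2 addrC.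
- by move/gsumP: E1 => [h _]; move/gsumN: E2; rewrite addrC.
- by move/gsumP: E2 => [h _]; move/gsumN: E1; rewrite addrC.
Qed.

Lemma gsumA a b c ab abc : gsum a b = Some ab -> gsum ab c = Some abc ->
  exists bc, gsum b c = Some bc /\ gsum a bc = Some abc.
Proof.
move=> /gsumP [h1 e1] /gsumP [h2 e2].
have hbc : pog_le (proj1_sig b + proj1_sig c) w.
  rewrite e1 in h2; rewrite /pog_le.
  have -> : w - (proj1_sig b + proj1_sig c) =
            (w - (proj1_sig a + proj1_sig b + proj1_sig c)) + proj1_sig a.
    by rewrite [RHS]addrAC -(addrA (proj1_sig a)) addrKA.
  apply: pog_posD => //; case: (a) => x [hx _] /=; exact/pos_le0.
case E: (gsum b c) => [bc|]; last by move/gsumN: E.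
move/gsumP: (E) => [_ e3].
exists bc; split => //; apply/gsumP.
by rewrite e3 addrA -e1 -e2; split => //; case: (abc) => x [].
Qed.

Lemma gcomplP a b : gsum a b = Some gone <-> b = gcompl a.
Proof.
split.
- move/gsumP => [_ /= e]; apply: gval_inj => /=.
  by apply/eqP; rewrite eq_sym subr_eq (addrC (proj1_sig b)) -e.
- move=> ->; apply/gsumP => /=; rewrite addrC subrK; split => //.
  by rewrite /pog_le subrr; exact: pog_pos0.
Qed.

Lemma goneP a : gsum a gone <> None <-> a = gzero.
Proof.
split.
- move=> h; case E: (gsum a gone) => [c|] //; move/gsumP: E => [/= hl _].
  apply: gval_inj => /=; case: (a) hl => x [hx _] /= hl.
  apply: pog_posN; first exact/pos_le0.
  by move: hl; rewrite /pog_le opprD addrA addrAC subrr add0r.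
- move=> -> /gsumN; apply; rewrite /= add0r /pog_le subrr; exact: pog_pos0.
Qed.

Definition GammaEA : effect_algebra :=
  @EffectAlgebra gcar gsum gcompl gzero gone gsumC gsumA gcomplP goneP.

End Gamma.
Lemma pos_decomp2 (A : pogu) (a : A) :
  {pq : A * A | pog_pos pq.1 /\ pog_pos pq.2 /\ a = pq.1 - pq.2}.
Proof.
apply: constructive_indefinite_description.
by have [p [q h]] := pos_decomp a; exists (p, q).
Qed.

Lemma addKl' (M : zmodType) (a b : M) : a + b - a = b.
Proof. by rewrite addrC addKr. Qed.

Lemma zmod_swap (M : zmodType) (x y z w : M) : x + y = z + w -> x - w = z - y.
Proof. by move=> h; rewrite -[x](addrK y) h addrAC addrK. Qed.

Lemma pos3 (X : pog) (a b c : X) : pog_pos b -> pog_pos c -> pog_pos (a + b + c - a).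
Proof. by move=> hb hc; rewrite -(addrA a b c) addKl'; apply: pog_posD. Qed.

Lemma compl_sum (X : effect_algebra) (x : X) : ea_sum x (ea_compl x) = Some ea_one.
Proof. by apply (proj2 (ea_complP _ _)). Qed.

Lemma unit_pos (A : pogu) : pog_pos (pg_unit : A).
Proof. by case: (pg_unitP A). Qed.

Section Mu.
Variables (E F : effect_algebra) (T : ea_tensor E F) (GE : univ_group E)
  (GF : univ_group F) (GT : univ_group (et_obj T))
  (P : pogu_tensor (ug_obj GE) (ug_obj GF)).

Local Notation eE := (ug_eta GE).
Local Notation eF := (ug_eta GF).
Local Notation eT := (ug_eta GT).
Local Notation tm := (et_map T).

Lemma bim_r x y1 y2 y : ea_sum y1 y2 = Some y -> eT (tm x y) = eT (tm x y1) + eT (tm x y2).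
Proof. by move=> h; apply: eta_sum; case: (et_bimor T) => h1 _; apply: h1. Qed.

Lemma bim_l y x1 x2 x : ea_sum x1 x2 = Some x -> eT (tm x y) = eT (tm x1 y) + eT (tm x2 y).
Proof. by move=> h; apply: eta_sum; case: (et_bimor T) => _ [h1 _]; apply: h1. Qed.

Lemma bim_one : tm ea_one ea_one = ea_one.
Proof. by case: (et_bimor T) => _ [_ h]. Qed.

Lemma phi_gamma x : gamma_hom (eT (tm x ea_one)) (fun y => eT (tm x y)).
Proof.
split; [|split].
- move=> y; split; first exact/pos_le0/eta_pos.
  by rewrite /pog_le (bim_r x (compl_sum y)) addKl'; apply: eta_pos.
- by move=> a b c h; apply: bim_r.
- by [].
Qed.

Definition gx (x : E) : ug_obj GF -> ug_obj GT :=
  sval (ug_ext_ex GF (eta_pos GT (tm x ea_one)) (phi_gamma x)).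

Lemma gxP x : pog_hom (gx x) /\ gx x pg_unit = eT (tm x ea_one) /\
  forall y, gx x (eF y) = eT (tm x y).
Proof. by rewrite /gx; case: ug_ext_ex. Qed.

Lemma gx_sum x1 x2 x : ea_sum x1 x2 = Some x -> forall b, gx x b = gx x1 b + gx x2 b.
Proof.
move=> h b; apply: (ug_ext (g := gx x) (g' := fun b => gx x1 b + gx x2 b)).
- by case: (gxP x).
- by apply: pog_hom_add2; [case: (gxP x1)|case: (gxP x2)].
by move=> y; rewrite !(proj2 (proj2 (gxP _))); apply: bim_l.
Qed.

Lemma gx_pos x b : pog_pos b -> pog_pos (gx x b).
Proof. by case: (gxP x) => [[_ h] _]; apply: h. Qed.

Lemma psi_gamma b : pog_pos b -> gamma_hom (gx ea_one b) (fun x => gx x b).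
Proof.
move=> hb; split; [|split].
- move=> x; split; first exact/pos_le0/gx_pos.
  by rewrite /pog_le (gx_sum (compl_sum x)) addKl'; apply: gx_pos.
- by move=> a b' c h; apply: gx_sum.
- by [].
Qed.

Definition kb (b : ug_obj GF) : ug_obj GE -> ug_obj GT :=
  match excluded_middle_informative (pog_pos b) with
  | left hb => sval (ug_ext_ex GE (gx_pos ea_one hb) (psi_gamma hb))
  | right _ => fun _ => 0
  end.

Lemma kbP b : pog_pos b -> pog_hom (kb b) /\ forall x, kb b (eE x) = gx x b.
Proof.
move=> hb; rewrite /kb; case: excluded_middle_informative => // h.
by case: ug_ext_ex => /= k [? [? ?]].
Qed.

Lemma kb_add p q : pog_pos p -> pog_pos q -> forall a, kb (p + q) a = kb p a + kb q a.
Proof.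
move=> hp hq a.
apply: (ug_ext (g := kb (p + q)) (g' := fun a => kb p a + kb q a)).
- by case: (kbP (pog_posD hp hq)).
- by apply: pog_hom_add2; [case: (kbP hp)|case: (kbP hq)].
move=> x; rewrite !(proj2 (kbP _)) //; last exact: pog_posD.
by case: (gxP x) => [[h _] _]; apply: h.
Qed.

Lemma kb0 a : kb 0 a = 0.
Proof.
have := kb_add (pog_pos0 _) (pog_pos0 _) a; rewrite addr0 => h.
by apply: (@addrI _ (kb 0 a)); rewrite -h addr0.
Qed.

Definition H (a : ug_obj GE) (b : ug_obj GF) : ug_obj GT :=
  kb (sval (pos_decomp2 b)).1 a - kb (sval (pos_decomp2 b)).2 a.

Lemma H_rep a b p q : pog_pos p -> pog_pos q -> b = p - q -> H a b = kb p a - kb q a.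
Proof.
move=> hp hq e; rewrite /H; case: pos_decomp2 => [[p' q'] [/= hp' [hq' e']]] /=.
have e2 : p' + q = p + q'.
  have e3 : p' - q' = p - q by rewrite -e' -e.
  by rewrite -[p'](subrK q') e3 addrAC subrK.
apply: zmod_swap; rewrite -!kb_add //; congr kb; exact: e2.
Qed.

Lemma H_biadd : biadditive H.
Proof.
split.
- move=> a b1 b2.
  have [p1 [q1 [hp1 [hq1 e1]]]] := pos_decomp b1.
  have [p2 [q2 [hp2 [hq2 e2]]]] := pos_decomp b2.
  rewrite (H_rep a hp1 hq1 e1) (H_rep a hp2 hq2 e2).
  rewrite (@H_rep a (b1 + b2) (p1 + p2) (q1 + q2) (pog_posD hp1 hp2) (pog_posD hq1 hq2)).
    by rewrite !kb_add // opprD addrACA.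
  by rewrite e1 e2 opprD addrACA.
- move=> a1 a2 b.
  have [p [q [hp [hq e]]]] := pos_decomp b.
  rewrite !(H_rep _ hp hq e).
  rewrite (pog_hom_add (proj1 (kbP hp))) (pog_hom_add (proj1 (kbP hq))).
  by rewrite opprD addrACA.
Qed.

Lemma H_pos a b : pog_pos b -> H a b = kb b a.
Proof.
move=> hb; rewrite (@H_rep a b b 0 hb (pog_pos0 _)); last by rewrite subr0.
by rewrite kb0 subr0.
Qed.

Lemma H_bipos : bipos H.
Proof. by move=> a b ha hb; rewrite H_pos //; case: (kbP hb) => [[_ h] _]; apply: h. Qed.

Lemma H_eta x y : H (eE x) (eF y) = eT (tm x y).
Proof. by rewrite H_pos; [rewrite (proj2 (kbP (eta_pos GF y)) x) (proj2 (proj2 (gxP x)))|apply: eta_pos]. Qed.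

Lemma H_unit : H pg_unit pg_unit = pg_unit.
Proof.
rewrite H_pos; last exact: unit_pos.
rewrite -{1}(eta_one GE) (proj2 (kbP (unit_pos _))).
by rewrite (proj1 (proj2 (gxP _))) bim_one eta_one.
Qed.
Definition mm : pt_obj P -> ug_obj GT :=
  sval (constructive_indefinite_description _ (pt_univ P H_biadd)).

Lemma mmP : addf mm /\ forall a b, mm (pt_map P a b) = H a b.
Proof.
rewrite /mm; case: constructive_indefinite_description => /= h [[h1 h2] _].
by split.
Qed.

Lemma mm_mu : is_mu mm.
Proof.
split; last by move=> x y; rewrite (proj2 mmP) H_eta.
split; last by rewrite (pt_unit P) (proj2 mmP) H_unit.
split; first exact: (proj1 mmP).
apply: pt_pos_hom; first exact: (proj1 mmP).
by move=> a b ha hb; rewrite (proj2 mmP); apply: H_bipos.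
Qed.

Local Notation uP := (pg_unit : pt_obj P).

Lemma beta_in x y : pog_le 0 (pt_map P (eE x) (eF y)) /\ pog_le (pt_map P (eE x) (eF y)) uP.
Proof.
split; first by apply/pos_le0; apply: pt_posP; apply: eta_pos.
rewrite /pog_le (pt_unit P) -(eta_one GE) -(eta_one GF).
rewrite (eta_sum GE (compl_sum x)) pt_addl (eta_sum GF (compl_sum y)) pt_addr.
apply: pos3; apply: pt_posP; try apply: pog_posD; apply: eta_pos.
Qed.

Definition GP := GammaEA (unit_pos (pt_obj P)).

Definition beta (x : E) (y : F) : GP := exist _ _ (beta_in x y).

Lemma beta_bimor : ea_bimor beta.
Proof.
split; [|split].
- move=> x y1 y2 y h; apply/gsumP => /=.
  have e : pt_map P (eE x) (eF y) = pt_map P (eE x) (eF y1) + pt_map P (eE x) (eF y2).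
    by rewrite (eta_sum GF h) pt_addr.
  by rewrite -e; split => //; case: (beta_in x y).
- move=> y x1 x2 x h; apply/gsumP => /=.
  have e : pt_map P (eE x) (eF y) = pt_map P (eE x1) (eF y) + pt_map P (eE x2) (eF y).
    by rewrite (eta_sum GE h) pt_addl.
  by rewrite -e; split => //; case: (beta_in x y).
- by apply: gval_inj => /=; rewrite !eta_one (pt_unit P).
Qed.

Definition nn : et_obj T -> GP :=
  sval (constructive_indefinite_description _ (et_univ T beta_bimor)).

Lemma nnP : ea_hom nn /\ forall x y, nn (tm x y) = beta x y.
Proof.
by rewrite /nn; case: constructive_indefinite_description => /= h [[h1 h2] _].
Qed.

Definition nphi (t : et_obj T) : pt_obj P := proj1_sig (nn t).

Lemma nphi_gamma : gamma_hom uP nphi.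
Proof.
split; [|split].
- by move=> t; rewrite /nphi; case: (nn t).
- move=> a b c h; have [[h1 _] _] := nnP.
  by have /gsumP [_ e] := h1 _ _ _ h.
- by rewrite /nphi (proj2 (proj1 nnP)).
Qed.

Definition ntil : ug_obj GT -> pt_obj P :=
  sval (ug_ext_ex GT (unit_pos (pt_obj P)) nphi_gamma).

Lemma ntilP : pog_hom ntil /\ ntil pg_unit = uP /\ forall t, ntil (eT t) = nphi t.
Proof. by rewrite /ntil; case: ug_ext_ex. Qed.

Lemma eT_in t : pog_le 0 (eT t) /\ pog_le (eT t) pg_unit.
Proof. by split; [apply/pos_le0; apply: eta_pos|apply: eta_le]. Qed.

Definition GT' := GammaEA (unit_pos (ug_obj GT)).

Definition beta' (x : E) (y : F) : GT' := exist _ _ (eT_in (tm x y)).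

Lemma beta'_bimor : ea_bimor beta'.
Proof.
split; [|split].
- move=> x y1 y2 y h; apply/gsumP => /=.
  by rewrite -(bim_r x h); split => //; apply: eta_le.
- move=> y x1 x2 x h; apply/gsumP => /=.
  by rewrite -(bim_l y h); split => //; apply: eta_le.
- by apply: gval_inj => /=; rewrite bim_one eta_one.
Qed.

Lemma mm_hom : pogu_hom mm.
Proof. by case: mm_mu. Qed.

Lemma h1_in t : pog_le 0 (mm (nphi t)) /\ pog_le (mm (nphi t)) pg_unit.
Proof.
have [[ma mp] mu] := mm_hom.
rewrite /nphi; case: (nn t) => v [v0 v1] /=; split.
  by apply/pos_le0; apply: mp; apply/pos_le0.
by rewrite /pog_le -mu -(addfB ma); apply: mp.
Qed.

Lemma mm_ntil t : mm (nphi t) = eT t.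
Proof.
pose h1 (t : et_obj T) : GT' := exist _ _ (h1_in t).
pose h2 (t : et_obj T) : GT' := exist _ _ (eT_in t).
have [h [_ uniq]] := et_univ T beta'_bimor.
have [[ma mp] mu] := mm_hom.
have [[n1 n2] ne] := nnP.
have E2 : forall t, h2 t = h t.
  apply: uniq; last by move=> x y; apply: gval_inj.
  split; last by apply: gval_inj => /=; rewrite eta_one.
  move=> a b c hs; apply/gsumP => /=; rewrite -(eta_sum GT hs); split => //.
  exact: eta_le.
have E1 : forall t, h1 t = h t.
  apply: uniq.
    split.
      move=> a b c hs; apply/gsumP => /=.
      have e : mm (nphi c) = mm (nphi a) + mm (nphi b).
        by have /gsumP [_ e] := n1 _ _ _ hs; rewrite /nphi e ma.
      by rewrite -e; split => //; case: (h1_in c).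
    by apply: gval_inj => /=; rewrite /nphi n2 /= mu.
  move=> x y; apply: gval_inj => /=.
  by rewrite /nphi ne /= (proj2 mmP) H_eta.
have : h1 t = h2 t by rewrite E1 E2.
by move=> /(congr1 (@proj1_sig _ _)).
Qed.

Lemma mu_iso_sec : exists m : pt_obj P -> ug_obj GT,
    is_mu m /\ pogu_iso m /\
    forall m' : pt_obj P -> ug_obj GT, is_mu m' -> forall t, m' t = m t.
Proof.
exists mm; split; first exact: mm_mu.
have [[ma mp] mu] := mm_hom.
have [nh [n1 ne]] := ntilP.
split.
  split; first exact: mm_hom.
  exists ntil; split; first by split.
  split.
  - move=> t; apply: (tensor_ext (h1 := ntil \o mm) (h2 := id)).
    + by apply: pog_hom_comp => //; split.
    + exact: pog_hom_id.
    move=> x y /=; rewrite (proj2 mmP) H_eta ne /nphi (proj2 nnP) //.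
  - move=> s; apply: (ug_ext (g := mm \o ntil) (g' := id)).
    + by apply: pog_hom_comp => //; split.
    + exact: pog_hom_id.
    by move=> t /=; rewrite ne mm_ntil.
move=> m' [m'h m'e] t; apply: tensor_ext.
- exact: pogu_hom_pog m'h.
- by split.
by move=> x y; rewrite m'e (proj2 mmP) H_eta.
Qed.

End Mu.

Theorem theorem6p5 :
  epsilon_ok /\ mu_iso_ok /\ mu_natural /\ mu_assoc /\ mu_left_unit /\ mu_right_unit.
Proof.
split; first exact: epsilon_okP.
split; first by move=> *; apply: mu_iso_sec.
split; first exact: mu_naturalP.
split; first exact: mu_assocP.
split; first exact: mu_left_unitP.
exact: mu_right_unitP.
Qed.
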